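(* Let $r_{\mathrm{free}}$ be the number of generators of the torsion-free part of the $\mathbb{Z}_2[[q]]$-module $H^*(C_{\mathrm{borel}},d_{\mathrm{borel}})$ and $r_{\mathrm{tor}}$ the number of generators of its torsion part. Then $$r_{\mathrm{free}}+2r_{\mathrm{tor}}=\dim_{\mathbb{Z}_2}H^*(C,d).$$
   Context: $M$ is a closed smooth manifold with an involution $\iota$, $f$ an $\iota$-invariant Morse function with $\iota$-invariant metric such that the gradient flows of $f$ and $f|M^{\mathrm{inv}}$ are Morse–Smale and there is a constant $i_{\mathrm{anti}}$ with $i_M(x)=i_{M^{\mathrm{inv}}}(x)+i_{\mathrm{anti}}$ for every $\iota$-invariant critical point $x$ ($M^{\mathrm{inv}}$ the fixed set, $i$ Morse indices). $(C,d)$ is the $\mathbb{Z}_2$ Morse cochain complex of $f$, $\iota_{\mathrm{morse}}:C\to C$ the chain map sending a critical point $x$ to $\iota(x)$. $C_{\mathrm{borel}}=C[[q]]=C\otimes\mathbb{Z}_2[[q]]$ with $q$ of degree $1$, and $d_{\mathrm{borel}}=d+(\iota_{\mathrm{morse}}-\mathrm{id})q$, extended $\mathbb{Z}_2[[q]]$-linearly. *)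

(* Defs.v *)
From HB Require Import structures.
From mathcomp Require Import all_boot all_order all_algebra.
Set Implicit Arguments. Unset Strict Implicit. Unset Printing Implicit Defensive.
Import Order.TTheory GRing.Theory Num.Theory.
Local Open Scope ring_scope.

(* The Morse cochain complex C has Z_2-basis the critical points 'I_n;
   a cochain is a row vector 'rV['F_2]_n, and d acts by right
   multiplication x |-> x *m D, so D i j = coefficient of j in d(i). *)

Definition morse_inv (n : nat) (iota : 'I_n -> 'I_n) : 'M['F_2]_n :=
  \matrix_(i, j) ((iota i == j)%:R : 'F_2).

Definition fps := nat -> 'F_2.
(* C_borel = C[[q]] = C (x) Z_2[[q]] : sequences of cochains (coefficients of q^m). *)
Definition pser (n : nat) := nat -> 'rV['F_2]_n.

Definition smul (n : nat) (a : fps) (s : pser n) : pser n :=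
  fun m => \sum_(i < m.+1) a i *: s (m - i)%N.

(* d_borel = d + (iota_morse - id) q, extended Z_2[[q]]-linearly. *)
Definition dborel (n : nat) (D : 'M['F_2]_n) (iota : 'I_n -> 'I_n) (s : pser n)
  : pser n :=
  fun m => s m *m D +
    (if m is m'.+1 then s m' *m (morse_inv iota - 1%:M) else 0).

Definition is_cocycle n D iota (s : pser n) : Prop :=
  forall m, dborel D iota s m = 0.
Definition is_coboundary n D iota (s : pser n) : Prop :=
  exists u : pser n, forall m, dborel D iota u m = s m.

Definition comb n rf rt (a : 'I_rf -> fps) (b : 'I_rt -> fps)
  (g : 'I_rf -> pser n) (t : 'I_rt -> pser n) : pser n :=
  fun m => \sum_(i < rf) smul (a i) (g i) m + \sum_(j < rt) smul (b j) (t j) m.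

Definition qdiv (k : nat) (b : fps) : Prop := forall i, (i < k)%N -> b i = 0.

(* The classes of g_1..g_rf, t_1..t_rt give an isomorphism of Z_2[[q]]-modules
   Z_2[[q]]^rf (+) (+)_j Z_2[[q]]/(q^(k j))  ~=  H^*(C_borel, d_borel),
   with every k j >= 1: rf generators of the free part and rt generators of
   the torsion part (cyclic decomposition). *)
Definition borel_decomp n (D : 'M['F_2]_n) (iota : 'I_n -> 'I_n) rf rt
  (g : 'I_rf -> pser n) (t : 'I_rt -> pser n) (k : 'I_rt -> nat) : Prop :=
  [/\ forall i, is_cocycle D iota (g i),
      forall j, is_cocycle D iota (t j),
      forall j, (0 < k j)%N,
      (* surjectivity onto cohomology *)
      forall z, is_cocycle D iota z ->
        exists a b, is_coboundary D iota (fun m => z m - comb a b g t m)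
    & (* kernel is exactly 0 (+) (+)_j q^(k j) Z_2[[q]] *)
      forall a b, is_coboundary D iota (comb a b g t) <->
        ((forall i m, a i m = 0) /\ (forall j, qdiv (k j) (b j)))].

Definition cohom_dim n (D : 'M['F_2]_n) : nat := (\rank (kermx D) - \rank D)%N.

(* Main.v *)
Require Import Defs.
From HB Require Import structures.
From mathcomp Require Import all_boot all_order all_algebra.
From Stdlib Require Import FunctionalExtensionality ClassicalEpsilon.
Import GRing.Theory.
Local Open Scope ring_scope.
Set Implicit Arguments. Unset Strict Implicit.

Lemma F2_add_self (x : 'F_2) : x + x = 0.
Proof. rewrite -mulr2n -mulr_natr. have -> : (2%:R : 'F_2) = 0 by apply/eqP. by rewrite mulr0. Qed.

Lemma mx_add_self m p (M : 'M['F_2]_(m,p)) : M + M = 0.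
Proof. by apply/matrixP=> i j; rewrite !mxE F2_add_self. Qed.

Definition up {V : zmodType} (s : nat -> V) : nat -> V :=
  fun m => if m is m'.+1 then s m' else 0.
Definition dn {V : zmodType} (s : nat -> V) : nat -> V := fun m => s m.+1.
Definition cst {V : zmodType} (c : V) : nat -> V :=
  fun m => if m is 0 then c else 0.
Definition sadd {V : zmodType} (s s' : nat -> V) : nat -> V := fun m => s m + s' m.
Definition ssub {V : zmodType} (s s' : nat -> V) : nat -> V := fun m => s m - s' m.
Definition szero {V : zmodType} : nat -> V := fun _ => 0.
Definition ssum {V : zmodType} r (F : 'I_r -> nat -> V) : nat -> V :=
  fun m => \sum_(j < r) F j m.

Lemma inv2 n (iota : 'I_n -> 'I_n) (hinv : forall i, iota (iota i) = i) :
  morse_inv iota *m morse_inv iota = 1%:M.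
Proof.
apply/matrixP=> i j; rewrite !mxE (bigD1 (iota i)) //= big1 ?addr0.
  by rewrite !mxE eqxx mul1r hinv.
by move=> k /negbTE hk; rewrite !mxE eq_sym hk mul0r.
Qed.

Lemma dd n (D : 'M['F_2]_n) iota (hDD : D *m D = 0)
  (hinv : forall i, iota (iota i) = i)
  (hchain : morse_inv iota *m D = D *m morse_inv iota) (s : pser n) :
  dborel D iota (dborel D iota s) = szero.
Proof.
set P := morse_inv iota.
have AA : (P - 1%:M) *m (P - 1%:M) = 0.
  rewrite mulmxBl !mulmxBr inv2 // mul1mx mulmx1 mulmx1. idtac.
  by rewrite opprB mx_add_self.
have AD : (P - 1%:M) *m D = D *m (P - 1%:M).
  by rewrite mulmxBl mulmxBr mul1mx mulmx1 hchain.
apply: functional_extensionality => m; rewrite /dborel /szero.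
case: m => [|m]; first by rewrite !addr0 -mulmxA hDD mulmx0.
case: m => [|m].
  by rewrite addr0 mulmxDl -!mulmxA hDD mulmx0 add0r AD mx_add_self.
rewrite !mulmxDl -!mulmxA hDD mulmx0 add0r AA mulmx0 addr0 AD mx_add_self //.
Qed.

Ltac fe := apply: functional_extensionality => ?.

Lemma dB_add n (D : 'M['F_2]_n) iota (s s' : pser n) :
  dborel D iota (sadd s s') = sadd (dborel D iota s) (dborel D iota s').
Proof.
apply: functional_extensionality => x; rewrite /dborel /sadd; case: x => [|m]; first by rewrite mulmxDl !addr0.
by rewrite !mulmxDl addrACA.
Qed.

Lemma dB_sub n (D : 'M['F_2]_n) iota (s s' : pser n) :
  dborel D iota (ssub s s') = ssub (dborel D iota s) (dborel D iota s').
Proof.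
apply: functional_extensionality => x; rewrite /dborel /ssub; case: x => [|m]; first by rewrite mulmxBl !addr0.
by rewrite !mulmxBl opprD addrACA.
Qed.

Lemma dB_zero n (D : 'M['F_2]_n) iota : dborel D iota (szero : pser n) = szero.
Proof. by apply: functional_extensionality => x; rewrite /dborel /szero; case: x => [|m]; rewrite !mul0mx ?addr0. Qed.

Lemma dB_sum n (D : 'M['F_2]_n) iota r (F : 'I_r -> pser n) :
  dborel D iota (ssum F) = ssum (fun j => dborel D iota (F j)).
Proof.
apply: functional_extensionality => x; rewrite /dborel /ssum; case: x => [|m].
  by rewrite addr0 mulmx_suml; apply: eq_bigr => j _; rewrite addr0.
by rewrite !mulmx_suml -big_split.
Qed.

Lemma dB_up n (D : 'M['F_2]_n) iota (s : pser n) :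
  dborel D iota (up s) = up (dborel D iota s).
Proof.
apply: functional_extensionality => x; rewrite /dborel /up; case: x => [|m]; first by rewrite mul0mx addr0.
by case: m => [|m] //; rewrite mul0mx.
Qed.

Lemma dB_cst n (D : 'M['F_2]_n) iota (v : 'rV_n) :
  dborel D iota (cst v) = sadd (cst (v *m D)) (up (cst (v *m (morse_inv iota - 1%:M)))).
Proof.
apply: functional_extensionality => x; rewrite /dborel /sadd /cst /up.
by case: x => [|[|m]] //=; rewrite !mul0mx.
Qed.

Lemma up_inj {V : zmodType} (s s' : nat -> V) : up s = up s' -> s = s'.
Proof. by move=> h; apply: functional_extensionality => x; have := f_equal (fun f => f x.+1) h; apply. Qed.

Lemma dn_up {V : zmodType} (s : nat -> V) : dn (up s) = s.
Proof. by []. Qed.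

Lemma up_dn {V : zmodType} (s : nat -> V) : s 0%N = 0 -> up (dn s) = s.
Proof. by move=> h; apply: functional_extensionality => x; case: x. Qed.

Lemma up_add {V : zmodType} (s s' : nat -> V) : up (sadd s s') = sadd (up s) (up s').
Proof. by apply: functional_extensionality => x; case: x => //=; rewrite /sadd /= addr0. Qed.

Lemma up_sub {V : zmodType} (s s' : nat -> V) : up (ssub s s') = ssub (up s) (up s').
Proof. by apply: functional_extensionality => x; case: x => //=; rewrite /ssub /= subr0. Qed.

Lemma up_sum {V : zmodType} r (F : 'I_r -> nat -> V) :
  up (ssum F) = ssum (fun j => up (F j)).
Proof. by apply: functional_extensionality => x; case: x => //=; rewrite /ssum /= big1. Qed.

Lemma up_zero {V : zmodType} : up (szero : nat -> V) = szero.
Proof. by apply: functional_extensionality => x; case: x. Qed.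

Lemma smul_at0 n a (s : pser n) : smul a s 0%N = a 0%N *: s 0%N.
Proof. by rewrite /smul big_ord1. Qed.

Lemma smul_upl n a (s : pser n) : smul (up a) s = up (smul a s).
Proof.
apply: functional_extensionality => x; rewrite /smul /up; case: x => [|m]; first by rewrite big_ord1 scale0r.
rewrite big_ord_recl /= scale0r add0r; apply: eq_bigr => i _.
by rewrite /bump /= add1n subSS.
Qed.

Lemma smul_upr n a (s : pser n) : smul a (up s) = up (smul a s).
Proof.
apply: functional_extensionality => x; rewrite /smul /up; case: x => [|m]; first by rewrite big_ord1 scaler0.
rewrite big_ord_recr /= subnn scaler0 addr0; apply: eq_bigr => i _.
by rewrite subSn // -ltnS.
Qed.

Lemma dB_smul n (D : 'M['F_2]_n) iota a (s : pser n) :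
  dborel D iota (smul a s) = smul a (dborel D iota s).
Proof.
apply: functional_extensionality => x; rewrite /dborel /smul mulmx_suml.
case: x => [|m].
  by rewrite !big_ord1 !addr0 scalemxAl.
rewrite [X in _ = X]big_ord_recr /= subnn addr0.
rewrite [X in X + _ = _]big_ord_recr /= subnn.
rewrite -addrA (addrC (_ *: _ *m D)) addrA scalemxAl.
congr (_ + _). rewrite mulmx_suml -big_split. apply: eq_bigr => i _.
rewrite subSn; last by rewrite -ltnS (ltn_ord i).
rewrite scalerDr !scalemxAl. reflexivity.
Qed.

Lemma smul_zl n (s : pser n) : smul szero s = szero.
Proof.
apply: functional_extensionality => x; rewrite /smul /szero.
by apply: big1 => i _; rewrite scale0r.
Qed.

Lemma smul_zr n (a : fps) : smul a (szero : pser n) = szero.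
Proof.
apply: functional_extensionality => x; rewrite /smul /szero.
by apply: big1 => i _; rewrite scaler0.
Qed.

Lemma smul_cst n c (s : pser n) : smul (cst c) s = fun m => c *: s m.
Proof.
apply: functional_extensionality => x; rewrite /smul big_ord_recl /= subn0.
by rewrite big1 ?addr0 // => i _; rewrite scale0r.
Qed.

Lemma smul_subl n (a a' : fps) (s : pser n) :
  smul (ssub a a') s = ssub (smul a s) (smul a' s).
Proof.
apply: functional_extensionality => x; rewrite /smul /ssub -sumrB.
by apply: eq_bigr => i _; rewrite scalerBl.
Qed.

Lemma smul_addr n (a : fps) (s s' : pser n) :
  smul a (sadd s s') = sadd (smul a s) (smul a s').
Proof.
apply: functional_extensionality => x; rewrite /smul /sadd -big_split.
by apply: eq_bigr => i _; rewrite scalerDr.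
Qed.

Lemma smul_subr n (a : fps) (s s' : pser n) :
  smul a (ssub s s') = ssub (smul a s) (smul a s').
Proof.
apply: functional_extensionality => x; rewrite /smul /ssub -sumrB.
by apply: eq_bigr => i _; rewrite scalerBr.
Qed.

Lemma iter_up {V : zmodType} k (s : nat -> V) m :
  iter k up s m = if (k <= m)%N then s (m - k)%N else 0.
Proof.
elim: k m => [|k IH] m; first by rewrite subn0.
rewrite iterS /up; case: m => [|m] //; rewrite IH ltnS subSS //.
Qed.

Lemma smul_iterl n k a (s : pser n) : smul (iter k up a) s = iter k up (smul a s).
Proof. by elim: k => [|k IH] //; rewrite !iterS smul_upl IH. Qed.

Lemma smul_iterr n k a (s : pser n) : smul a (iter k up s) = iter k up (smul a s).
Proof. by elim: k => [|k IH] //; rewrite !iterS smul_upr IH. Qed.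

Lemma dB_iter n (D : 'M['F_2]_n) iota k (s : pser n) :
  dborel D iota (iter k up s) = iter k up (dborel D iota s).
Proof. by elim: k => [|k IH] //; rewrite !iterS dB_up IH. Qed.

Lemma qdiv_dec k (a : fps) : qdiv k a -> a = iter k up (iter k dn a).
Proof.
move=> h; apply: functional_extensionality => m; rewrite iter_up.
case: leqP => hk; last by rewrite h.
have E : forall j (b : fps) p, iter j dn b p = b (p + j)%N.
  by elim=> [|j IH] b p; [rewrite addn0 | rewrite iterS /dn IH addnS].
by rewrite E subnK.
Qed.

Lemma comb_sub n rf rt (a a' : 'I_rf -> fps) (b b' : 'I_rt -> fps) g t :
  ssub (comb a b g t) (comb a' b' g t) =
  comb (fun i => ssub (a i) (a' i)) (fun j => ssub (b j) (b' j)) g t :> pser n.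
Proof.
apply: functional_extensionality => x; rewrite /comb /ssub opprD addrACA -!sumrB.
by congr (_ + _); apply: eq_bigr => i _; rewrite smul_subl.
Qed.

Lemma up_comb n rf rt (a : 'I_rf -> fps) (b : 'I_rt -> fps) g t :
  up (comb a b g t) = comb (fun i => up (a i)) (fun j => up (b j)) g t :> pser n.
Proof.
apply: functional_extensionality => x; rewrite /comb.
case: x => [|m] /=.
  rewrite [X in _ = X + _]big1 => [|i _]; last by rewrite smul_at0 /up scale0r.
  rewrite [X in _ = _ + X]big1 => [|i _]; last by rewrite smul_at0 /up scale0r.
  by rewrite addr0.
by congr (_ + _); apply: eq_bigr => i _; rewrite smul_upl.
Qed.

Lemma comb_at0 n rf rt (a : 'I_rf -> fps) (b : 'I_rt -> fps) g t :
  comb a b g t 0%N = \sum_i a i 0%N *: g i 0%N + \sum_j b j 0%N *: t j 0%N :> 'rV_n.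
Proof.
by rewrite /comb; congr (_ + _); apply: eq_bigr => i _; rewrite smul_at0.
Qed.

Lemma dB_comb n (D : 'M['F_2]_n) iota rf rt (a : 'I_rf -> fps) (b : 'I_rt -> fps) g t :
  (forall i, is_cocycle D iota (g i)) -> (forall j, is_cocycle D iota (t j)) ->
  dborel D iota (comb a b g t) = szero.
Proof.
move=> hg ht.
have hg' : forall i, dborel D iota (g i) = szero.
  by move=> i; apply: functional_extensionality; apply: hg.
have ht' : forall i, dborel D iota (t i) = szero.
  by move=> i; apply: functional_extensionality; apply: ht.
have -> : comb a b g t = sadd (ssum (fun i => smul (a i) (g i)))
                              (ssum (fun j => smul (b j) (t j))) by [].
rewrite dB_add !dB_sum.
apply: functional_extensionality => x; rewrite /sadd /ssum /szero.
rewrite [X in X + _]big1 => [|i _]; last by rewrite dB_smul hg' smul_zr.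
rewrite [X in _ + X]big1 => [|i _]; last by rewrite dB_smul ht' smul_zr.
by rewrite addr0.
Qed.

Lemma sadd0s {V : zmodType} (s : nat -> V) : sadd szero s = s.
Proof. by apply: functional_extensionality => x; rewrite /sadd /szero add0r. Qed.
Lemma sadds0 {V : zmodType} (s : nat -> V) : sadd s szero = s.
Proof. by apply: functional_extensionality => x; rewrite /sadd /szero addr0. Qed.
Lemma ssubs0 {V : zmodType} (s : nat -> V) : ssub s szero = s.
Proof. by apply: functional_extensionality => x; rewrite /ssub /szero subr0. Qed.
Lemma cst0 {V : zmodType} : cst (0 : V) = szero.
Proof. by apply: functional_extensionality => x; case: x. Qed.
Lemma ssum0 {V : zmodType} r : ssum (fun _ : 'I_r => (szero : nat -> V)) = szero.
Proof. by apply: functional_extensionality => x; rewrite /ssum big1. Qed.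
Lemma dn_sum {V : zmodType} r (F : 'I_r -> nat -> V) : dn (ssum F) = ssum (fun j => dn (F j)).
Proof. by []. Qed.
Lemma dn_iter {V : zmodType} k (s : nat -> V) : (0 < k)%N -> dn (iter k up s) = iter k.-1 up s.
Proof. by case: k => // k _; rewrite iterS dn_up. Qed.
Lemma dn_sub {V : zmodType} (s s' : nat -> V) : dn (ssub s s') = ssub (dn s) (dn s').
Proof. by []. Qed.
Lemma dB_dn n (D : 'M['F_2]_n) iota (s : pser n) : s 0%N = 0 ->
  dborel D iota (dn s) = dn (dborel D iota s).
Proof.
move=> h; rewrite -{2}(up_dn h) dB_up; by [].
Qed.
Lemma dB_at0 n (D : 'M['F_2]_n) iota (s : pser n) : dborel D iota s 0%N = s 0%N *m D.
Proof. by rewrite /dborel addr0. Qed.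
Lemma cob_ext n (D : 'M['F_2]_n) iota (s : pser n) :
  (exists u, dborel D iota u = s) -> is_coboundary D iota s.
Proof. by case=> u hu; exists u => m; rewrite hu. Qed.
Lemma cob_ext' n (D : 'M['F_2]_n) iota (s : pser n) :
  is_coboundary D iota s -> exists u, dborel D iota u = s.
Proof. by case=> u hu; exists u; apply: functional_extensionality. Qed.
Lemma coc_ext n (D : 'M['F_2]_n) iota (s : pser n) :
  dborel D iota s = szero -> is_cocycle D iota s.
Proof. by move=> h m; rewrite h. Qed.
Lemma comb_zero_a n rf rt (b : 'I_rt -> fps) (g : 'I_rf -> pser n) t :
  comb (fun _ => szero) b g t = ssum (fun j => smul (b j) (t j)).
Proof.
apply: functional_extensionality => m; rewrite /comb /ssum big1 ?add0r //.
by move=> i _; rewrite smul_zl.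
Qed.

Lemma iter_up_zero {V : zmodType} k : iter k up (szero : nat -> V) = szero.
Proof. by elim: k => [|k IH] //; rewrite iterS IH up_zero. Qed.

Lemma IND n (D : 'M['F_2]_n) iota (hDD : D *m D = 0)
  (hinv : forall i, iota (iota i) = i)
  (hchain : morse_inv iota *m D = D *m morse_inv iota)
  rf rt (g : 'I_rf -> pser n) (t : 'I_rt -> pser n) (k : 'I_rt -> nat)
  (hg : forall i, is_cocycle D iota (g i))
  (ht : forall j, is_cocycle D iota (t j))
  (hk : forall j, (0 < k j)%N)
  (hsurj : forall z, is_cocycle D iota z ->
        exists a b, is_coboundary D iota (fun m => z m - comb a b g t m))
  (hker : forall a b, is_coboundary D iota (comb a b g t) <->
        ((forall i m, a i m = 0) /\ (forall j, qdiv (k j) (b j))))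
  (u : 'I_rt -> pser n) (hu : forall j, dborel D iota (u j) = iter (k j) up (t j))
  (al : 'I_rf -> 'F_2) (be ga : 'I_rt -> 'F_2) (w : 'rV_n)
  (H : \sum_i al i *: g i 0%N + \sum_j be j *: t j 0%N + \sum_j ga j *: u j 0%N = w *m D) :
  (forall i, al i = 0) /\ (forall j, be j = 0) /\ (forall j, ga j = 0).
Proof.
pose c0 := comb (fun i => cst (al i)) (fun j => cst (be j)) g t.
pose U := ssum (fun j => smul (cst (ga j)) (u j)).
pose dcw := dborel D iota (cst w).
pose E := ssub (sadd c0 U) dcw.
have E0 : E 0%N = 0.
  rewrite /E /ssub /sadd /c0 comb_at0 /U /ssum /dcw dB_at0.
  have -> : \sum_j smul (cst (ga j)) (u j) 0%N = \sum_j ga j *: u j 0%N.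
    by apply: eq_bigr => j _; rewrite smul_at0.
  by rewrite /= H subrr.
have dE : dborel D iota E = ssum (fun j => iter (k j) up (smul (cst (ga j)) (t j))).
  rewrite /E dB_sub dB_add /c0 dB_comb // /dcw dd // /U dB_sum sadd0s ssubs0.
  f_equal; apply: functional_extensionality => j.
  by rewrite dB_smul hu smul_iterr.
have hga : forall j, ga j = 0.
  have hE' : dborel D iota (dn E) =
      comb (fun _ => szero) (fun j => iter (k j).-1 up (cst (ga j))) g t.
    rewrite dB_dn // dE dn_sum comb_zero_a; f_equal.
    apply: functional_extensionality => j.
    by rewrite dn_iter // smul_iterl.
  have [_ hq] := proj1 (hker _ _) (cob_ext (ex_intro _ (dn E) hE')).
  move=> j; have := hq j (k j).-1; rewrite iter_up leqnn subnn /=.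
  by apply; rewrite ltn_predL.
have hU : U = szero.
  rewrite /U; have -> : (fun j => smul (cst (ga j)) (u j)) = fun _ => szero.
    by apply: functional_extensionality => j; rewrite hga cst0 smul_zl.
  exact: ssum0.
have dE' : dborel D iota E = szero.
  rewrite dE; have -> : (fun j => iter (k j) up (smul (cst (ga j)) (t j))) = fun _ => szero.
    by apply: functional_extensionality => j; rewrite hga cst0 smul_zl iter_up_zero.
  exact: ssum0.
have hcoc : is_cocycle D iota (dn E).
  by apply: coc_ext; rewrite dB_dn // dE'.
have [a' [b' hcb]] := hsurj _ hcoc.
have [v hv] := cob_ext' hcb.
have Ec : forall m, c0 m = E m + dcw m.
  by move=> m; rewrite /E /ssub /sadd hU /szero addr0 subrK.
have hcob : is_coboundary D iota
   (comb (fun i => ssub (cst (al i)) (up (a' i))) (fun j => ssub (cst (be j)) (up (b' j))) g t).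
  apply: cob_ext; exists (sadd (up v) (cst w)).
  rewrite -comb_sub -up_comb dB_add dB_up hv.
  apply: functional_extensionality => m.
  have -> : (fun m => dn E m - comb a' b' g t m) = ssub (dn E) (comb a' b' g t) by [].
  rewrite up_sub up_dn // /sadd /ssub -/c0 Ec -/dcw.
  by rewrite addrAC.
have [h1 h2] := proj1 (hker _ _) hcob.
split; [move=> i | split=> // j].
  by have := h1 i 0%N; rewrite /ssub /= subr0.
by have := h2 j 0%N (hk j); rewrite /ssub /= subr0.
Qed.

Lemma SPAN n (D : 'M['F_2]_n) iota (hDD : D *m D = 0)
  (hinv : forall i, iota (iota i) = i)
  (hchain : morse_inv iota *m D = D *m morse_inv iota)
  rf rt (g : 'I_rf -> pser n) (t : 'I_rt -> pser n) (k : 'I_rt -> nat)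
  (hg : forall i, is_cocycle D iota (g i))
  (ht : forall j, is_cocycle D iota (t j))
  (hk : forall j, (0 < k j)%N)
  (hsurj : forall z, is_cocycle D iota z ->
        exists a b, is_coboundary D iota (fun m => z m - comb a b g t m))
  (hker : forall a b, is_coboundary D iota (comb a b g t) <->
        ((forall i m, a i m = 0) /\ (forall j, qdiv (k j) (b j))))
  (u : 'I_rt -> pser n) (hu : forall j, dborel D iota (u j) = iter (k j) up (t j))
  (x : 'rV_n) (hx : x *m D = 0) :
  exists (al : 'I_rf -> 'F_2) (be ga : 'I_rt -> 'F_2) (w : 'rV_n),
  x = \sum_i al i *: g i 0%N + \sum_j be j *: t j 0%N + \sum_j ga j *: u j 0%N + w *m D.
Proof.
pose y := cst (x *m (morse_inv iota - 1%:M)).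
have dcx : dborel D iota (cst x) = up y by rewrite dB_cst hx cst0 sadd0s.
have dy : dborel D iota y = szero.
  by apply: up_inj; rewrite up_zero -dB_up -dcx dd.
have [a [b hcb]] := hsurj y (coc_ext dy).
have [w hw] := cob_ext' hcb.
have hw' : dborel D iota w = ssub y (comb a b g t) by [].
have hc : is_coboundary D iota (comb (fun i => up (a i)) (fun j => up (b j)) g t).
  apply: cob_ext; exists (ssub (cst x) (up w)).
  rewrite -up_comb dB_sub dB_up hw' dcx up_sub.
  apply: functional_extensionality => m; rewrite /ssub.
  by rewrite opprB addrC subrK.
have [ha hb] := proj1 (hker _ _) hc.
pose ga j := b j (k j).-1.
pose cc j := ssub (up (b j)) (iter (k j) up (cst (ga j))).
have hcc : forall j, qdiv (k j).+1 (cc j).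
  move=> j m hm; rewrite /cc /ssub iter_up.
  rewrite ltnS leq_eqVlt in hm; case/orP: hm => [/eqP ->|hm].
    rewrite leqnn subnn /= /ga.
    by move: (hk j); case: (k j) => // kk _ /=; rewrite subrr.
  by rewrite hb // leqNgt hm subr0.
pose c' j := iter (k j).+1 dn (cc j).
have hsm : forall j, smul (cc j) (t j) = dborel D iota (up (smul (c' j) (u j))).
  move=> j; rewrite {1}(qdiv_dec (hcc j)) smul_iterl -smul_iterr (iterS _ up) -hu.
  by rewrite -dB_up -dB_smul smul_upr.
pose R := ssum (fun j => up (smul (c' j) (u j))).
pose U := ssum (fun j => smul (cst (ga j)) (u j)).
pose s := ssub (ssub (ssub (cst x) U) (up w)) R.
have hupa : (fun i => up (a i)) = fun _ => szero.
  by apply: functional_extensionality => i; apply: functional_extensionality => m; apply: ha.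
have ds : dborel D iota s = szero.
  rewrite /s !dB_sub dcx dB_up hw' /U /R !dB_sum up_sub up_comb hupa comb_zero_a.
  have -> : (fun j => dborel D iota (up (smul (c' j) (u j)))) = fun j => smul (cc j) (t j).
    by apply: functional_extensionality => j; rewrite hsm.
  have -> : (fun j => dborel D iota (smul (cst (ga j)) (u j))) =
            fun j => smul (iter (k j) up (cst (ga j))) (t j).
    by apply: functional_extensionality => j; rewrite dB_smul hu smul_iterr smul_iterl.
  have -> : (fun j => smul (cc j) (t j)) = fun j =>
      ssub (smul (up (b j)) (t j)) (smul (iter (k j) up (cst (ga j))) (t j)).
    by apply: functional_extensionality => j; rewrite smul_subl.
  apply: functional_extensionality => m; rewrite /ssub /ssum /szero.
  rewrite sumrB.
  set Y := up y m; set P := \sum_j _; set Q := \sum_j _.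
  rewrite (opprB Y) [X in X - _]addrC addrA subrK subrr //.
have s0 : s 0%N = x - \sum_j ga j *: u j 0%N.
  rewrite /s /ssub /U /R /ssum /= subr0.
  rewrite [X in _ - X]big1 ?subr0 //.
  by congr (_ - _); apply: eq_bigr => j _; rewrite smul_at0.
have [a2 [b2 hcb2]] := hsurj s (coc_ext ds).
have [v hv] := cob_ext' hcb2.
have := f_equal (fun f => f 0%N) hv; rewrite /= dB_at0 comb_at0 s0 => hv0.
exists (fun i => a2 i 0%N), (fun j => b2 j 0%N), ga, (v 0%N).
rewrite hv0.
set G := \sum_i _; set T := \sum_j b2 j 0%N *: _; set X := \sum_j ga j *: _.
rewrite addrC addrA subrK subrK //.
Qed.

Lemma LA n (D : 'M['F_2]_n) N (v : 'I_N -> 'rV_n) :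
  D *m D = 0 ->
  (forall i, v i *m D = 0) ->
  (forall (c : 'I_N -> 'F_2) w, \sum_i c i *: v i = w *m D -> forall i, c i = 0) ->
  (forall x, x *m D = 0 -> exists (c : 'I_N -> 'F_2) w,
       x = \sum_i c i *: v i + w *m D) ->
  N = cohom_dim D.
Proof.
move=> hDD hv hind hspan.
pose V : 'M['F_2]_(N, n) := \matrix_(i, j) v i 0 j.
have rV : forall i, row i V = v i.
  by move=> i; apply/rowP => j; rewrite !mxE.
have cV : forall c : 'rV_N, c *m V = \sum_i c 0 i *: v i.
  by move=> c; rewrite mulmx_sum_row; apply: eq_bigr => i _; rewrite rV.
have hK : (kermx D == V + D)%MS.
  apply/andP; split.
    apply/row_subP => i.
    have := hspan (row i (kermx D)); rewrite -row_mul mulmx_ker row0.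
    case=> // c [w ->]; apply: addmx_sub_adds; last exact: submxMl.
    have -> : \sum_i c i *: v i = (\row_i c i) *m V.
      by rewrite cV; apply: eq_bigr => k _; rewrite mxE.
    exact: submxMl.
  rewrite addsmx_sub; apply/andP; split; apply/sub_kermxP => //.
  by apply/row_matrixP => i; rewrite row_mul rV hv row0.
have hcap : \rank (V :&: D)%MS = 0%N.
  suff -> : (V :&: D)%MS = 0 by rewrite mxrank0.
  apply/eqP; rewrite -submx0; apply/row_subP => i.
  have := row_sub i (V :&: D)%MS; rewrite sub_capmx => /andP [/submxP [c hc] /submxP [w hw]].
  have h0 := hind (fun k => c 0 k) w; rewrite -cV -hc hw in h0.
  have c0 : c = 0 by apply/rowP => k; rewrite (h0 erefl) mxE.
  by rewrite hc c0 mul0mx sub0mx.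
have hrV : \rank V = N.
  have hk : kermx V = 0.
    apply/eqP; rewrite -submx0; apply/row_subP => i.
    set c := row i (kermx V).
    have hc : c *m V = 0 by rewrite /c -row_mul mulmx_ker row0.
    have h0 := hind (fun k => c 0 k) 0; rewrite -cV hc mul0mx in h0.
    have c0 : c = 0 by apply/rowP => k; rewrite (h0 erefl) mxE.
    by rewrite c0 sub0mx.
  have := mxrank_ker V; rewrite hk mxrank0 => /eqP; rewrite eq_sym subn_eq0 => h.
  by apply/eqP; rewrite eqn_leq rank_leq_row h.
rewrite /cohom_dim (eqmx_rank hK).
have := mxrank_sum_cap V D; rewrite hcap addn0 hrV => ->.
by rewrite addnK.
Qed.

Lemma split_l m p (i : 'I_m) : split (lshift p i) = inl i.
Proof. exact: (unsplitK (inl _ i)). Qed.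
Lemma split_r m p (i : 'I_p) : split (rshift m i) = inr i.
Proof. exact: (unsplitK (inr _ i)). Qed.

Theorem lemma2p10 (n : nat) (deg : 'I_n -> nat) (D : 'M['F_2]_n)
  (iota : 'I_n -> 'I_n)
  (hDD : D *m D = 0)
  (hdeg : forall i j, D i j != 0 -> deg j = (deg i).+1)
  (hinv : forall i, iota (iota i) = i)
  (hideg : forall i, deg (iota i) = deg i)
  (hchain : morse_inv iota *m D = D *m morse_inv iota)
  (rf rt : nat) (g : 'I_rf -> pser n) (t : 'I_rt -> pser n) (k : 'I_rt -> nat) :
  borel_decomp D iota g t k -> (rf + 2 * rt)%N = cohom_dim D.
Proof.
case=> hg ht hk hsurj hker.
have hu0 : forall j, exists u, dborel D iota u = iter (k j) up (t j).
  move=> j.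
  pose bj := fun j' => if j' == j then iter (k j) up (cst (1 : 'F_2)) else szero.
  have [|w hw] := proj2 (hker (fun _ => szero) bj).
    split=> // j' m hm; rewrite /bj; case: eqP => [e|_] //.
    by rewrite iter_up leqNgt -e hm.
  exists w; apply: functional_extensionality => m; rewrite hw comb_zero_a /ssum.
  rewrite (bigD1 j) //= big1 ?addr0; last first.
    by move=> j' /negbTE hj'; rewrite /bj hj' smul_zl.
  rewrite /bj eqxx smul_iterl smul_cst.
  have -> : (fun m => (1 : 'F_2) *: t j m) = t j.
    by apply: functional_extensionality => m'; rewrite scale1r.
  by [].
pose u j := proj1_sig (constructive_indefinite_description _ (hu0 j)).
have hu : forall j, dborel D iota (u j) = iter (k j) up (t j).
  by move=> j; exact: (proj2_sig (constructive_indefinite_description _ (hu0 j))).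
have -> : (rf + 2 * rt = rf + rt + rt)%N by rewrite mul2n -addnn addnA.
pose vec (i : 'I_(rf + rt + rt)) : 'rV_n :=
  match split i with
  | inl i1 => match split i1 with inl a => g a 0%N | inr b => t b 0%N end
  | inr c => u c 0%N end.
have vsum : forall c : 'I_(rf + rt + rt) -> 'F_2, \sum_i c i *: vec i =
   \sum_a c (lshift rt (lshift rt a)) *: g a 0%N
   + \sum_b c (lshift rt (rshift rf b)) *: t b 0%N
   + \sum_j c (rshift (rf + rt) j) *: u j 0%N.
  move=> c; rewrite !big_split_ord /=.
  apply: f_equal2; first apply: f_equal2.
  + by apply: eq_bigr => i _; rewrite /vec !split_l.
  + by apply: eq_bigr => i _; rewrite /vec split_l split_r.
  + by apply: eq_bigr => i _; rewrite /vec split_r.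
apply: (LA hDD (v := vec)).
- move=> i; rewrite /vec; case: split => [i1|c]; first case: split => [a|b].
  + by rewrite -(dB_at0 D iota); apply: hg.
  + by rewrite -(dB_at0 D iota); apply: ht.
  + by rewrite -(dB_at0 D iota) hu iter_up leqNgt hk.
- move=> c w; rewrite vsum => H.
  have [h1 [h2 h3]] := IND hDD hinv hchain hg ht hk hsurj hker hu H.
  move=> i; rewrite -(splitK i); case: (split i) => [i1|j]; last exact: h3.
  rewrite -(splitK i1); case: (split i1) => [a|b]; [exact: h1 | exact: h2].
- move=> x hx.
  have [al [be [ga [w H]]]] := SPAN hDD hinv hchain hg ht hk hsurj hker hu hx.
  pose c (i : 'I_(rf + rt + rt)) : 'F_2 :=
    match split i with
    | inl i1 => match split i1 with inl a => al a | inr b => be b end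
    | inr j => ga j end.
  exists c, w; rewrite vsum H.
  apply: f_equal2 => //; apply: f_equal2; first apply: f_equal2.
  + by apply: eq_bigr => i _; rewrite /c !split_l.
  + by apply: eq_bigr => i _; rewrite /c split_l split_r.
  + by apply: eq_bigr => i _; rewrite /c split_r.
Qed.
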